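(* Let $G(\mathcal{M})=(R,T;E;c)$ and $G(\mathcal{M}')=(R,T;E;c')$ be two robot-task graphs where $c$ and $c'$ are injective on $E$. Let $\textsc{Auction}(\mathcal{M})=(W=(w_k),a)$ and $\textsc{Auction}(\mathcal{M}')=(W'=(w'_k),a')$. Suppose there exists some edge $e\in E$ which does not appear in $W$ such that $c'(f)=c(f)$ for all $f\in E\setminus\{e\}$. Then $\textsc{Auction}(\mathcal{M})=\textsc{Auction}(\mathcal{M}')$ if and only if $c'(e)>\max_{k\in B_e}c(w_k)$.
   Context: $R$ (robots) and $T$ (tasks) are finite disjoint sets with $R\neq\emptyset$, $|R\sqcup T|\ge3$. The robot-task graph $(R,T;E;c)$ has vertex set $R\sqcup T$, edge set $E$ consisting of all 2-element subsets of $R\sqcup T$, and a non-negative edge cost $c:E\to\mathbb{R}_+$ (with $\mathbb{R}_+=[0,\infty)\cup\{\infty\}$); injective means distinct edges have distinct costs. $\textsc{Auction}$ on $(R,T;E;c)$: set $A=\emptyset$ and $a(r)=0$ for all $r\in R$. For $k=1,\dots,|T|$ (bid rounds): let $w_k=\{s,t\}$ be the edge with $s\in R\cup A$, $t\in T\setminus A$ minimising $c(\{s,t\})$; set $a(t)=k$ and $A\leftarrow A\cup\{t\}$. The output is the list $W=(w_1,\dots,w_{|T|})$ of winning edges and the assignment function $a:R\sqcup T\to\{0,\dots,|T|\}$. Two auction outputs are equal if they have the same list and the same assignment function. For an edge $e=\{x,y\}$, $B_e=\{k\in\mathbb{Z}:\min(a(x),a(y))<k\le\max(a(x),a(y))\}$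 (computed from the output of $\textsc{Auction}(\mathcal{M})$); it is the set of bid rounds of $\textsc{Auction}(\mathcal{M})$ in which $e$ is considered. *)

(* Defs.v *)
From HB Require Import structures.
From mathcomp Require Import all_boot all_order all_algebra.
From mathcomp Require Import reals constructive_ereal.
Set Implicit Arguments. Unset Strict Implicit. Unset Printing Implicit Defensive.
Import Order.TTheory GRing.Theory Num.Theory.
Local Open Scope ereal_scope.

(* Vertex set R ⊔ T is a finite type V; [isR v] says v is a robot, the
   tasks are the vertices with [~~ isR v].  Edges are 2-element subsets
   of V, represented as [{set V}] of cardinality 2; a cost function is
   [c : {set V} -> \bar R] of which only the values on 2-sets matter. *)

Section Auction.
Variables (V : finType) (isR : pred V) (R : realType).

Definition is_edge (f : {set V}) : bool := #|f| == 2%N.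

Definition cost_nonneg (c : {set V} -> \bar R) : Prop :=
  forall f, is_edge f -> 0 <= c f.

Definition cost_injective (c : {set V} -> \bar R) : Prop :=
  forall f g, is_edge f -> is_edge g -> c f = c g -> f = g.

Definition cand (A : {set V}) (p : V * V) : bool :=
  [&& (isR p.1) || (p.1 \in A), ~~ isR p.2 & p.2 \notin A].

Definition pedge (p : V * V) : {set V} := [set p.1; p.2].

Definition bid (c : {set V} -> \bar R) (A : {set V}) : option (V * V) :=
  [pick p | cand A p && [forall q, cand A q ==> (c (pedge p) <= c (pedge q))]].

(* state after n bid rounds: (winning edges, assignment function, A) *)
Fixpoint auction_rec (c : {set V} -> \bar R) (n : nat)
  : seq {set V} * {ffun V -> nat} * {set V} :=
  match n with
  | 0 => ([::], [ffun=> 0%N], set0)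
  | n'.+1 =>
      let: (W, a, A) := auction_rec c n' in
      match bid c A with
      | Some p => (rcons W (pedge p),
                   [ffun x => if x == p.2 then n'.+1 else a x],
                   p.2 |: A)
      | None => (W, a, A)
      end
  end.

Definition num_tasks : nat := #|[set t | ~~ isR t]|.

Definition auction (c : {set V} -> \bar R) : seq {set V} * {ffun V -> nat} :=
  let: (W, a, _) := auction_rec c num_tasks in (W, a).

(* B_e for e = {x, y}, computed from an assignment function a *)
Definition Bset (a : {ffun V -> nat}) (x y : V) (k : nat) : bool :=
  (minn (a x) (a y) < k <= maxn (a x) (a y))%N.

(* max_{k ∈ B_e} c(w_k), with the max over the empty set being -oo *)
Definition maxB (c : {set V} -> \bar R) (x y : V) : \bar R :=
  let: (W, a) := auction c in
  \big[Order.max/-oo]_(1 <= k < (size W).+1 | Bset a x y k) c (nth set0 W k.-1).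

End Auction.

(* Main.v *)
Require Import Defs.
From HB Require Import structures.
From mathcomp Require Import all_boot all_order all_algebra.
From mathcomp Require Import reals constructive_ereal.
From mathcomp Require Import zify.
Import Order.TTheory GRing.Theory Num.Theory.
Local Open Scope ereal_scope.

Lemma cand_neq (V : finType) (isR : pred V) A (p : V * V) :
  cand isR A p -> p.1 != p.2.
Proof.
case: p => u w /=; rewrite /cand /=; case/and3P=> H1 H2 H3.
apply/eqP=> E; move: H1; rewrite E; by rewrite (negbTE H2) (negbTE H3).
Qed.

Lemma pedge_edge (V : finType) (p : V * V) : p.1 != p.2 -> is_edge (pedge p).
Proof. by move=> H; rewrite /is_edge /pedge cards2 H. Qed.

Lemma set2_eq (V : finType) (a b x y : V) :
  [set a; b] = [set x; y] -> (a = x /\ b = y) \/ (a = y /\ b = x).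
Proof.
move=> E.
have hx : x \in [set a; b] by rewrite E !inE eqxx.
have hy : y \in [set a; b] by rewrite E !inE eqxx orbT.
have ha : a \in [set x; y] by rewrite -E !inE eqxx.
have hb : b \in [set x; y] by rewrite -E !inE eqxx orbT.
move: hx hy ha hb; rewrite !inE.
by do 4 (case/orP=> /eqP ?); subst; auto.
Qed.

Lemma bid_some (R : realType) (V : finType) (isR : pred V)
  (c : {set V} -> \bar R) A p0 : cand isR A p0 ->
  exists p, [/\ bid isR c A = Some p, cand isR A p &
    forall q, cand isR A q -> c (pedge p) <= c (pedge q)].
Proof.
move=> Hp0.
have [p Pp Hmin] := @arg_minP _ _ (V * V)%type p0 (cand isR A)
   (fun p => c (pedge p)) Hp0.
rewrite /bid; case: pickP => [q /andP[Cq /forallP Mq] | H].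
  by exists q; split => // r Cr; exact: (implyP (Mq r) Cr).
exfalso; move: (H p); rewrite Pp /=; move/negP; apply.
by apply/forallP => r; apply/implyP => Cr; exact: Hmin.
Qed.

Lemma step_gen (R : realType) (V : finType) (isR : pred V)
  (c : {set V} -> \bar R) n : (exists r, isR r) ->
  (auction_rec isR c n).2 \subset [set t | ~~ isR t] ->
  (#|(auction_rec isR c n).2| < num_tasks isR)%N ->
  exists p, [/\ bid isR c (auction_rec isR c n).2 = Some p,
    cand isR (auction_rec isR c n).2 p,
    forall q, cand isR (auction_rec isR c n).2 q -> c (pedge p) <= c (pedge q) &
    auction_rec isR c n.+1 =
      (rcons (auction_rec isR c n).1.1 (pedge p),
       [ffun x => if x == p.2 then n.+1 else (auction_rec isR c n).1.2 x],
       p.2 |: (auction_rec isR c n).2)].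
Proof.
move=> [r Hr]; rewrite /=.
case: (auction_rec isR c n) => [[W a] A] /= Hsub Hcard.
have : ~~ ([set t | ~~ isR t] \subset A).
  apply/negP=> /subset_leq_card; rewrite /num_tasks in Hcard; lia.
case/subsetPn=> t; rewrite inE => Ht HtA.
have Cp0 : cand isR A (r, t) by rewrite /cand /= Hr Ht HtA.
have [p [Hb Cp Mp]] := @bid_some _ _ isR c A _ Cp0.
by exists p; split => //; rewrite Hb.
Qed.

Lemma inv (R : realType) (V : finType) (isR : pred V)
  (c : {set V} -> \bar R) n : (exists r, isR r) -> (n <= num_tasks isR)%N ->
  [/\ size (auction_rec isR c n).1.1 = n,
      (auction_rec isR c n).2 = [set v | (0 < (auction_rec isR c n).1.2 v)%N],
      forall v, ((auction_rec isR c n).1.2 v <= n)%N,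
      (auction_rec isR c n).2 \subset [set t | ~~ isR t] &
      #|(auction_rec isR c n).2| = n].
Proof.
move=> Hr; elim: n => [|n IH] Hn.
  split => //=; first by apply/setP=> v; rewrite !inE ffunE.
  - by move=> v; rewrite ffunE.
  - exact: sub0set.
  - exact: cards0.
have [H1 H2 H3 H4 H5] := IH (ltnW Hn).
have Hc : (#|(auction_rec isR c n).2| < num_tasks isR)%N by rewrite H5.
have [p [Hb Cp Mp ->]] := @step_gen _ _ isR c n Hr H4 Hc.
move: Cp; rewrite /cand => /and3P[_ Hp2 Hp2A].
split => /=.
- by rewrite size_rcons H1.
- apply/setP=> v; rewrite !inE ffunE; case: eqP => // _.
  by rewrite H2 inE.
- by move=> v; rewrite ffunE; case: eqP => // _; exact: leqW.
- by rewrite subUset sub1set inE Hp2 H4.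
- by rewrite cardsU1 Hp2A H5.
Qed.

Lemma prefix (R : realType) (V : finType) (isR : pred V)
  (c : {set V} -> \bar R) n d : (exists r, isR r) ->
  (n + d <= num_tasks isR)%N ->
  take n (auction_rec isR c (n + d)).1.1 = (auction_rec isR c n).1.1 /\
  [set v | (0 < (auction_rec isR c (n + d)).1.2 v <= n)%N] =
     (auction_rec isR c n).2.
Proof.
move=> Hr; elim: d => [|d IH] Hd.
  have Hd' : (n <= num_tasks isR)%N by rewrite addn0 in Hd.
  have [H1 H2 H3 _ _] := @inv _ _ isR c n Hr Hd'.
  rewrite addn0 take_oversize ?H1 //; split => //.
  by rewrite H2; apply/setP=> v; rewrite !inE H3 andbT.
have Hd' : (n + d <= num_tasks isR)%N by rewrite addnS in Hd; exact: ltnW.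
have [IH1 IH2] := IH Hd'.
have [H1 H2 H3 H4 H5] := @inv _ _ isR c (n + d) Hr Hd'.
have Hc : (#|(auction_rec isR c (n + d)).2| < num_tasks isR)%N.
  by rewrite H5 -addnS.
rewrite addnS.
have [p [Hb Cp Mp ->]] := @step_gen _ _ isR c (n + d) Hr H4 Hc.
move: Cp; rewrite /cand => /and3P[_ Hp2 Hp2A].
split => /=.
  by rewrite -cats1 takel_cat ?IH1 // H1 leq_addr.
rewrite -IH2; apply/setP=> v; rewrite !inE ffunE.
case: eqP => [->|_] //.
move: Hp2A; rewrite H2 inE -leqNgt leqn0 => /eqP ->.
by rewrite ltnn /=; apply/negbTE; rewrite -ltnNge ltnS leq_addr.
Qed.

Lemma auctionE (R : realType) (V : finType) (isR : pred V)
  (c : {set V} -> \bar R) :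
  auction isR c = ((auction_rec isR c (num_tasks isR)).1.1,
                   (auction_rec isR c (num_tasks isR)).1.2).
Proof. by rewrite /auction; case: auction_rec => [[]]. Qed.

Lemma key (R : realType) (V : finType) (isR : pred V)
  (c : {set V} -> \bar R) n : (exists r, isR r) ->
  (n < num_tasks isR)%N ->
  exists p, [/\ bid isR c (auction_rec isR c n).2 = Some p,
    cand isR (auction_rec isR c n).2 p,
    forall q, cand isR (auction_rec isR c n).2 q -> c (pedge p) <= c (pedge q),
    nth set0 (auction isR c).1 n = pedge p &
    (auction_rec isR c n).2 = [set v | (0 < (auction isR c).2 v <= n)%N]].
Proof.
move=> Hr Hn.
have [H1 H2 H3 H4 H5] := @inv _ _ isR c n Hr (ltnW Hn).
have Hc : (#|(auction_rec isR c n).2| < num_tasks isR)%N by rewrite H5.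
have [p [Hb Cp Mp Hs]] := @step_gen _ _ isR c n Hr H4 Hc.
exists p; split => //; rewrite auctionE /=.
  have E : num_tasks isR = (n.+1 + (num_tasks isR - n.+1))%N by lia.
  have Hle : (n.+1 + (num_tasks isR - n.+1) <= num_tasks isR)%N by lia.
  have [P1 _] := @prefix _ _ isR c n.+1 _ Hr Hle.
  rewrite E -(nth_take _ (ltnSn n)) P1 Hs /= nth_rcons H1 ltnn eqxx //.
have E : num_tasks isR = (n + (num_tasks isR - n))%N by lia.
have Hle : (n + (num_tasks isR - n) <= num_tasks isR)%N by lia.
have [_ P2] := @prefix _ _ isR c n _ Hr Hle.
by rewrite E P2.
Qed.

Lemma final_zero (R : realType) (V : finType) (isR : pred V)
  (c : {set V} -> \bar R) v : (exists r, isR r) ->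
  (((auction isR c).2 v) == 0)%N = isR v.
Proof.
move=> Hr; rewrite auctionE /=.
have [H1 H2 H3 H4 H5] := @inv _ _ isR c (num_tasks isR) Hr (leqnn _).
have E : (auction_rec isR c (num_tasks isR)).2 = [set t | ~~ isR t].
  by apply/eqP; rewrite eqEcard H4 H5 /num_tasks leqnn.
have E' : (v \in (auction_rec isR c (num_tasks isR)).2) = (v \in [set t | ~~ isR t]) by rewrite E.
rewrite H2 !inE in E'.
by rewrite eqn0Ngt E' negbK.
Qed.

Lemma candE (V : finType) (isR : pred V) (a : {ffun V -> nat}) k (q : V * V) :
  (forall v, (a v == 0)%N = isR v) -> (0 < k)%N ->
  cand isR [set v | (0 < a v <= k.-1)%N] q = (a q.1 < k <= a q.2)%N.
Proof.
move=> Hz Hk; rewrite /cand !inE -!Hz.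
case: (a q.1) => [|u]; case: (a q.2) => [|w] /=; lia.
Qed.

Lemma candB (V : finType) (isR : pred V) (a : {ffun V -> nat}) x y k :
  (forall v, (a v == 0)%N = isR v) -> (0 < k)%N ->
  (exists q, cand isR [set v | (0 < a v <= k.-1)%N] q /\ pedge q = [set x; y])
  <-> Bset a x y k.
Proof.
move=> Hz Hk; rewrite /Bset; split.
  move=> [q [Cq Eq]]; rewrite candE // in Cq.
  case: (@set2_eq _ _ _ _ _ Eq) => [[E1 E2]|[E1 E2]]; rewrite -E1 -E2; lia.
move=> HB.
case: (ltnP (a x) (a y)) => H.
  exists (x, y); rewrite candE //=; split => //; lia.
exists (y, x); rewrite candE //=; split; first lia.
by rewrite /pedge /= setUC.
Qed.

Lemma bid_eq (R : realType) (V : finType) (isR : pred V)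
  (c c' : {set V} -> \bar R) A p e :
  cost_injective c ->
  cand isR A p -> (forall q, cand isR A q -> c (pedge p) <= c (pedge q)) ->
  pedge p != e ->
  (forall f, is_edge f -> f != e -> c' f = c f) ->
  (forall q, cand isR A q -> pedge q = e -> c (pedge p) < c' e) ->
  bid isR c' A = bid isR c A.
Proof.
move=> Hinj Cp Mp Hpe Hc' He.
have Ep : c' (pedge p) = c (pedge p) by apply: Hc' => //; apply: pedge_edge; exact: cand_neq Cp.
rewrite /bid; apply: eq_pick => q /=.
case Cq: (cand isR A q) => //=.
have Eq_edge : is_edge (pedge q) by apply: pedge_edge; exact: cand_neq Cq.
apply/idP/idP => /forallP H; apply/forallP => r; apply/implyP => Cr.
- have Hp' : c' (pedge q) <= c (pedge p) by rewrite -Ep; exact: (implyP (H p) Cp).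
  have Hqe : pedge q != e.
    apply/eqP => Eqe; have := He q Cq Eqe; rewrite -Eqe => Hlt.
    by move: (lt_le_trans Hlt Hp'); rewrite ltxx.
  have Eq' : c' (pedge q) = c (pedge q) by exact: Hc'.
  have Er_edge : is_edge (pedge r) by apply: pedge_edge; exact: cand_neq Cr.
  case: (eqVneq (pedge r) e) => Hre.
    by rewrite -Eq'; apply: le_trans Hp' (Mp r Cr).
  by rewrite -Eq' -(Hc' _ Er_edge Hre); exact: (implyP (H r) Cr).
- have Eqp : c (pedge q) = c (pedge p).
    by apply: le_anti; rewrite (implyP (H p) Cp) Mp.
  have Eqp' : pedge q = pedge p.
    by apply: Hinj => //; apply: pedge_edge; exact: cand_neq Cp.
  rewrite Eqp' Ep.
  have Er_edge : is_edge (pedge r) by apply: pedge_edge; exact: cand_neq Cr.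
  case: (eqVneq (pedge r) e) => Hre.
    by rewrite Hre; apply: ltW; exact: He r Cr Hre.
  by rewrite (Hc' _ Er_edge Hre); exact: Mp.
Qed.

Theorem lemma6 (R : realType) (V : finType) (isR : pred V)
    (c c' : {set V} -> \bar R) (x y : V) :
  (exists r, isR r) ->
  (3 <= #|V|)%N ->
  cost_nonneg c -> cost_nonneg c' ->
  cost_injective c -> cost_injective c' ->
  x != y ->
  [set x; y] \notin (auction isR c).1 ->
  (forall f, is_edge f -> f != [set x; y] -> c' f = c f) ->
  (auction isR c = auction isR c' <-> maxB isR c x y < c' [set x; y]).
Proof.
move=> Hr _ _ Hnn' Hinj Hinj' Hxy He Hc'.
have Hedge : is_edge [set x; y] by rewrite /is_edge cards2 Hxy.
have Hsize : size (auction isR c).1 = num_tasks isR.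
  by rewrite auctionE /=; have [] := @inv _ _ isR c (num_tasks isR) Hr (leqnn _).
have maxBE : maxB isR c x y =
   \big[Order.max/-oo]_(1 <= k < (num_tasks isR).+1 | Bset (auction isR c).2 x y k)
      c (nth set0 (auction isR c).1 k.-1).
  by rewrite /maxB [auction isR c]surjective_pairing /= -Hsize.
have Hz := fun v => @final_zero _ _ isR c v Hr.
have Hnotin : forall n, (n < num_tasks isR)%N ->
    nth set0 (auction isR c).1 n != [set x; y].
  move=> n Hn; apply/eqP => E; move: He; rewrite -E mem_nth //.
  by rewrite Hsize.
split.
- move=> Heq; rewrite maxBE big_seq_cond; apply: bigmax_lt.
    exact: lt_le_trans ltNy0 (Hnn' _ Hedge).
  move=> k /andP[Hk HB]; rewrite mem_index_iota in Hk.
  have Hn : (k.-1 < num_tasks isR)%N by lia.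
  have [p [_ Cp Mp Hnth HA]] := @key _ _ isR c k.-1 Hr Hn.
  have [p' [_ Cp' Mp' Hnth' HA']] := @key _ _ isR c' k.-1 Hr Hn.
  rewrite -Heq in Hnth' HA'.
  have Hk0 : (0 < k)%N by lia.
  have [q [Cq Eq]] := (proj2 (@candB _ isR _ x y k Hz Hk0)) HB.
  rewrite -HA' in Cq.
  have H1 := Mp' q Cq; rewrite Eq -Hnth' in H1.
  have Hw := Hnotin _ Hn.
  have Hwedge : is_edge (nth set0 (auction isR c).1 k.-1).
    by rewrite Hnth'; apply: pedge_edge; exact: cand_neq Cp'.
  rewrite (Hc' _ Hwedge Hw) in H1.
  rewrite ltNge; apply/negP => H2.
  have E : c' [set x; y] = c' (nth set0 (auction isR c).1 k.-1).
    by rewrite (Hc' _ Hwedge Hw); apply: le_anti; rewrite H2 H1.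
  by move: Hw; rewrite (Hinj' _ _ Hedge Hwedge E) eqxx.
- move=> Hlt.
  suff Hall : forall n, (n <= num_tasks isR)%N ->
      auction_rec isR c' n = auction_rec isR c n.
    by rewrite !auctionE Hall.
  elim => [|n IH] Hn //.
  have Hn' : (n < num_tasks isR)%N by [].
  have [p [Hb Cp Mp Hnth HA]] := @key _ _ isR c n Hr Hn'.
  have Hbid : bid isR c' (auction_rec isR c n).2 = bid isR c (auction_rec isR c n).2.
    apply: (@bid_eq _ _ isR c c' _ p [set x; y]) => //.
      by rewrite -Hnth; exact: Hnotin.
    move=> q Cq Eq; rewrite HA in Cq.
    have Hk0 : (0 < n.+1)%N by [].
    have HB := (proj1 (@candB _ isR _ x y n.+1 Hz Hk0)) (ex_intro _ q (conj Cq Eq)).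
    apply: le_lt_trans Hlt; rewrite maxBE -Hnth.
    rewrite -[X in nth _ _ X]/(n.+1.-1).
    apply: (@le_bigmax_seq _ _ _ _ _ n.+1) => //.
    by rewrite mem_index_iota; lia.
  rewrite /= IH ?(ltnW Hn) //.
  by case: (auction_rec isR c n) Hbid => [[W0 a0] A0] /= ->.
Qed.
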